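(* Let $\Omega$ be a causal order on a finite set $E$ and $\underline I=(I_\omega)_{\omega\in E}$ a family of non-empty finite sets. The space of input histories $\mathrm{Hist}(\Omega,\underline I)$ is tight.
   Context: A causal order on $E$ is a preorder $\le_\Omega$; $\downarrow\omega=\{\xi:\xi\le_\Omega\omega\}$. $\mathrm{Hist}(\Omega,\underline I)=\bigcup_{\xi\in E}\prod_{\omega\in\downarrow\xi}I_\omega$, a set of partial functions ordered by restriction ($f\le g$ iff $\mathrm{dom}(f)\subseteq\mathrm{dom}(g)$ and $g|_{\mathrm{dom}(f)}=f$). Compatible = agreeing on common domain; compatible $\mathcal F$ has join $\bigvee\mathcal F$ (union). For a space $\Theta$: $\mathrm{Ext}(\Theta)=\{\bigvee\mathcal F:\emptyset\ne\mathcal F\subseteq\Theta\text{ compatible}\}$, $\mathrm{tips}_\Theta(h)=\mathrm{dom}(h)\setminus\bigcup\{\mathrm{dom}(k):k\in\mathrm{Ext}(\Theta),k<h\}$. $\Theta$ is tight if for every $k\in\mathrm{Ext}(\Theta)$ and every $\omega\in\mathrm{dom}(k)$ there is a unique $h\in\Theta$ with $h\le k$ and $\omega\in\mathrm{tips}_\Theta(h)$. *)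

(* Defs.v *)
From mathcomp Require Import all_boot.
Set Implicit Arguments. Unset Strict Implicit. Unset Printing Implicit Defensive.

Section Hist.
Variables (E : finType) (I : E -> finType).

Definition pfun := forall w : E, option (I w).

Definition in_dom (f : pfun) (w : E) : Prop := f w <> None.

(* Restriction order: dom f ⊆ dom g and g agrees with f on dom f. *)
Definition pf_le (f g : pfun) : Prop := forall w, in_dom f w -> g w = f w.
Definition pf_lt (f g : pfun) : Prop := pf_le f g /\ f <> g.

Definition Hist (le : rel E) : pfun -> Prop :=
  fun h => exists xi : E, forall w, in_dom h w <-> le w xi.

Definition compatible (F : pfun -> Prop) : Prop :=
  forall f g, F f -> F g -> forall w, in_dom f w -> in_dom g w -> f w = g w.

Definition is_join (F : pfun -> Prop) (k : pfun) : Prop :=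
  (forall w, in_dom k w <-> exists2 f, F f & in_dom f w) /\
  (forall f, F f -> pf_le f k).

Definition Ext (Theta : pfun -> Prop) : pfun -> Prop :=
  fun k => exists F : pfun -> Prop,
    [/\ (exists f, F f), (forall f, F f -> Theta f), compatible F & is_join F k].

Definition tips (Theta : pfun -> Prop) (h : pfun) (w : E) : Prop :=
  in_dom h w /\ ~ (exists k, [/\ Ext Theta k, pf_lt k h & in_dom k w]).

Definition tight (Theta : pfun -> Prop) : Prop :=
  forall k, Ext Theta k -> forall w, in_dom k w ->
    exists! h, [/\ Theta h, pf_le h k & tips Theta h w].

End Hist.

(* Main.v *)
Require Import Defs.
From mathcomp Require Import all_boot.
From Stdlib Require Import Classical FunctionalExtensionality.

Section Aux.
Set Implicit Arguments.
Variables (E : finType) (le : rel E) (I : E -> finType).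
Hypothesis le_refl : reflexive le.
Hypothesis le_trans : transitive le.

Definition restr (k : pfun I) (w : E) : pfun I :=
  fun v => if le v w then k v else None.

Lemma restr_Hist k w : (forall v, le v w -> in_dom k v) -> Hist le (restr k w).
Proof.
move=> H; exists w => v; rewrite /in_dom /restr; split.
  by case: (le v w).
by move=> Hv; rewrite Hv; apply: H.
Qed.

Lemma Ext_single (Th : pfun I -> Prop) h : Th h -> Ext Th h.
Proof.
move=> Hh; exists (fun f => f = h); split.
- by exists h.
- by move=> f ->.
- by move=> f g -> -> w.
- split; last by move=> f -> v.
  move=> v; split; first by move=> Hv; exists h.
  by case=> f ->.
Qed.

Lemma Ext_down (k : pfun I) w : Ext (Hist le) k -> in_dom k w ->
  forall v, le v w -> in_dom k v.
Proof.
case=> F [_ HT _ [Hd Hle]] Hw v Hvw.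
have [f Ff Hfw] := (proj1 (Hd w) Hw).
have [xi Hxi] := HT f Ff.
have Hfv : in_dom f v by apply/Hxi; apply: le_trans Hvw (proj1 (Hxi w) Hfw).
by rewrite /in_dom (Hle f Ff v Hfv).
Qed.

End Aux.

Theorem proposition23 (E : finType) (le : rel E)
  (le_refl : reflexive le) (le_trans : transitive le)
  (I : E -> finType) (I_nonempty : forall w : E, inhabited (I w)) :
  @tight E I (@Hist E I le).
Proof.
move=> k Hk w Hw.
have Hdown := Ext_down le_trans Hk Hw.
exists (restr le k w); split.
  split.
  - exact: restr_Hist.
  - by move=> v; rewrite /in_dom /restr; case: (le v w).
  - split; first by rewrite /in_dom /restr le_refl; exact: Hw.
    case=> k' [Hk' [Hle Hne] Hk'w].
    apply: Hne; apply: functional_extensionality_dep => v.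
    have Hd' := Ext_down le_trans Hk' Hk'w.
    rewrite /restr; case Hvw: (le v w).
      have Hv : in_dom k' v by apply: Hd'.
      by move: (Hle v Hv); rewrite /restr Hvw.
    case Ek: (k' v) => [x|] //.
    have Hv : in_dom k' v by rewrite /in_dom Ek.
    by move: (Hle v Hv); rewrite /restr Hvw Ek.
move=> h [[xi Hxi] Hhk [Hhw Htip]].
have Hwxi : le w xi by apply/Hxi.
have Hhd : forall v, le v w -> in_dom h v.
  by move=> v Hv; apply/Hxi; apply: le_trans Hv Hwxi.
have Eh : restr le h w = h.
  apply: NNPP => Hne; apply: Htip; exists (restr le h w); split.
  - by apply: Ext_single; apply: restr_Hist.
  - split=> //; move=> v; rewrite /in_dom /restr; by case: (le v w).
  - by rewrite /in_dom /restr le_refl.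
apply: functional_extensionality_dep => v.
rewrite /restr; case Hvw: (le v w).
  by rewrite (Hhk v (Hhd v Hvw)).
by rewrite -Eh /restr Hvw.
Qed.
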